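(* Let $(\mathbf A,\exists)$ be a monadic Pavelka algebra with $\mathbf A$ semisimple, and let $\forall(x)=\neg\exists(\neg x)$. The following are equivalent: (i) the relation $R\colon\mathrm{Spec_M}\mathbf A\times\mathrm{Spec_M}\mathbf A\to[0,1]$, $R(F,F')=\bigwedge_{a\in A}(\forall(a)/F'\rightarrow a/F)$, is $\{0,1\}$-valued (i.e. $(\mathbf A,\exists)$ is induced by a boolean equivalence); (ii) $(\mathbf A,\exists)$ is a monadic Pavelka algebra in the original sense, i.e. for all $x,y\in A$ and all constants $\mathbf r$: $x\le\exists x$; $\exists(x\vee y)=\exists x\vee\exists y$; $\exists(\neg\exists x)=\neg\exists x$; $\exists(\exists x\oplus\exists y)=\exists x\oplus\exists y$; $\exists(x\oplus x)=\exists x\oplus\exists x$; $\exists(x\cdot x)=\exists x\cdot\exists x$; and $\exists\mathbf r=\mathbf r$; (iii) $\forall(x)\cdot\forall(y)\le\forall(x\cdot y)$ for all $x,y\in A$.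
   Context: An MV-algebra $(A;\oplus,\neg,0)$ carries derived operations $1=\neg0$, $x\cdot y=\neg(\neg x\oplus\neg y)$, $x\rightarrow y=\neg x\oplus y$, $x\vee y=\neg(\neg x\oplus y)\oplus y$, $x\wedge y=\neg(\neg x\vee\neg y)$, order $x\le y$ iff $\neg x\oplus y=1$. The standard MV-algebra is $[0,1]$ with $x\oplus y=\min\{x+y,1\}$, $\neg x=1-x$. A Pavelka algebra is $\mathbf A=(A;\oplus,\neg,\{\mathbf r\mid r\in[0,1]\cap\mathbb Q\})$ with $(A;\oplus,\neg,\mathbf 0)$ an MV-algebra, $\mathbf r\oplus\mathbf s=\mathbf t$ whenever $\min\{r+s,1\}=t$, $\neg\mathbf r=\mathbf s$ whenever $1-r=s$. Filters are filters of the MV-reduct; $\mathrm{Spec_M}\mathbf A$ is the set of maximal proper filters; for $F\in\mathrm{Spec_M}\mathbf A$, $\mathbf A/F$ embeds uniquely into $[0,1]$ and $x/F$ is identified with its image. Semisimple: MV-reduct is a subdirect product of simple MV-algebras. A monadic Pavelka algebra is $(\mathbf A,\exists)$ with $\exists$ a closure operator (monotone, $x\le\exists x$, $\exists\exists x=\exists x$) such that $\exists(\neg\exists(x))=\neg\exists(x)$ and $\mathbf r\cdot\exists(x)=\exists(\mathbf r\cdot x)$ for all $x$ and constants $\mathbf r$. *)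

(* Defs.v *)
From Stdlib Require Import Reals QArith Qcanon.

Record MVAlg := {
  mcar :> Type;
  mplus : mcar -> mcar -> mcar;
  mneg : mcar -> mcar;
  mzero : mcar;
  mplus_assoc : forall x y z, mplus x (mplus y z) = mplus (mplus x y) z;
  mplus_comm : forall x y, mplus x y = mplus y x;
  mplus_zero : forall x, mplus x mzero = x;
  mneg_neg : forall x, mneg (mneg x) = x;
  mplus_one : forall x, mplus x (mneg mzero) = mneg mzero;
  mluk : forall x y, mplus (mneg (mplus (mneg x) y)) y = mplus (mneg (mplus (mneg y) x)) x
}.

Section Derived.
Variable A : MVAlg.
Definition mone : A := mneg A (mzero A).
Definition mmul (x y : A) : A := mneg A (mplus A (mneg A x) (mneg A y)).
Definition mimp (x y : A) : A := mplus A (mneg A x) y.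
Definition mjoin (x y : A) : A := mplus A (mneg A (mplus A (mneg A x) y)) y.
Definition mmeet (x y : A) : A := mneg A (mjoin (mneg A x) (mneg A y)).
Definition mle (x y : A) : Prop := mplus A (mneg A x) y = mone.

Definition is_filter (F : A -> Prop) : Prop :=
  F mone /\ (forall x y, F x -> mle x y -> F y) /\ (forall x y, F x -> F y -> F (mmul x y)).
Definition proper_filter (F : A -> Prop) : Prop := is_filter F /\ ~ F (mzero A).
Definition maximal_filter (F : A -> Prop) : Prop :=
  proper_filter F /\
  forall G : A -> Prop, proper_filter G -> (forall x, F x -> G x) -> forall x, G x -> F x.
Definition simple_mv : Prop :=
  mzero A <> mone /\
  forall F : A -> Prop, is_filter F -> (forall x, F x -> x = mone) \/ (forall x, F x).
End Derived.

Arguments mone {A}. Arguments mmul {A}. Arguments mimp {A}. Arguments mjoin {A}.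
Arguments mmeet {A}. Arguments mle {A}.

Definition is_mv_hom (A B : MVAlg) (f : A -> B) : Prop :=
  (forall x y, f (mplus A x y) = mplus B (f x) (f y)) /\
  (forall x, f (mneg A x) = mneg B (f x)) /\
  f (mzero A) = mzero B.

Definition semisimple (A : MVAlg) : Prop :=
  exists (I : Type) (B : I -> MVAlg) (f : forall i, A -> B i),
    (forall i, simple_mv (B i)) /\
    (forall i, is_mv_hom A (B i) (f i)) /\
    (forall i, forall b : B i, exists a, f i a = b) /\
    (forall x y : A, (forall i, f i x = f i y) -> x = y).

Definition splus (x y : R) : R := Rmin (x + y) 1.
Definition sneg (x : R) : R := 1 - x.
Definition simp (x y : R) : R := splus (sneg x) y.

Definition is_std_hom (A : MVAlg) (h : A -> R) : Prop :=
  (forall x, 0 <= h x <= 1)%R /\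
  (forall x y, h (mplus A x y) = splus (h x) (h y)) /\
  (forall x, h (mneg A x) = sneg (h x)) /\
  h (mzero A) = 0%R.

(** [h] realises the unique embedding of A/F into [0,1]:
    an MV-homomorphism into [0,1] whose 1-kernel is exactly F,
    so that x/F is identified with h x. *)
Definition quot_embedding (A : MVAlg) (F : A -> Prop) (h : A -> R) : Prop :=
  is_std_hom A h /\ forall x, F x <-> h x = 1%R.

Definition unitQ (r : Qc) : Prop := Qcle (Q2Qc 0) r /\ Qcle r (Q2Qc 1).

Record Pavelka := {
  pmv :> MVAlg;
  pconst : Qc -> pmv;   (* only meaningful on rationals in [0,1] *)
  pconst_zero : pconst (Q2Qc 0) = mzero pmv;
  pconst_plus_lt : forall r s, unitQ r -> unitQ s -> Qcle (Qcplus r s) (Q2Qc 1) ->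
      mplus pmv (pconst r) (pconst s) = pconst (Qcplus r s);
  pconst_plus_ge : forall r s, unitQ r -> unitQ s -> Qcle (Q2Qc 1) (Qcplus r s) ->
      mplus pmv (pconst r) (pconst s) = pconst (Q2Qc 1);
  pconst_neg : forall r, unitQ r -> mneg pmv (pconst r) = pconst (Qcminus (Q2Qc 1) r)
}.

(** Monadic Pavelka algebra (closure-operator version) *)
Definition monadic (A : Pavelka) (E : A -> A) : Prop :=
  (forall x y, mle x y -> mle (E x) (E y)) /\
  (forall x, mle x (E x)) /\
  (forall x, E (E x) = E x) /\
  (forall x, E (mneg A (E x)) = mneg A (E x)) /\
  (forall x r, unitQ r -> mmul (pconst A r) (E x) = E (mmul (pconst A r) x)).

Definition univ (A : Pavelka) (E : A -> A) (x : A) : A := mneg A (E (mneg A x)).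

Definition monadic_original (A : Pavelka) (E : A -> A) : Prop :=
  (forall x, mle x (E x)) /\
  (forall x y, E (mjoin x y) = mjoin (E x) (E y)) /\
  (forall x, E (mneg A (E x)) = mneg A (E x)) /\
  (forall x y, E (mplus A (E x) (E y)) = mplus A (E x) (E y)) /\
  (forall x, E (mplus A x x) = mplus A (E x) (E x)) /\
  (forall x, E (mmul x x) = mmul (E x) (E x)) /\
  (forall r, unitQ r -> E (pconst A r) = pconst A r).

Definition is_inf (P : R -> Prop) (r : R) : Prop :=
  (forall t, P t -> (r <= t)%R) /\ (forall b, (forall t, P t -> (b <= t)%R) -> (b <= r)%R).

(** R(F,F') = inf_{a in A} (forall(a)/F' -> a/F) is {0,1}-valued,
    where a/F := h a, a/F' := h' a for the embeddings of A/F, A/F' into [0,1]. *)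
Definition R_boolean (A : Pavelka) (E : A -> A) : Prop :=
  forall (F F' : A -> Prop) (h h' : A -> R),
    maximal_filter A F -> maximal_filter A F' ->
    quot_embedding A F h -> quot_embedding A F' h' ->
    forall r : R,
      is_inf (fun t => exists a : A, t = simp (h' (univ A E a)) (h a)) r ->
      r = 0%R \/ r = 1%R.

(* Main.v *)
Require Import Defs.
From Stdlib Require Import ZArith Reals QArith Qcanon Qreals Lra Lia Classical List.
From mathcomp Require classical_sets.

Definition rv (q : Qc) : R := Q2R (this q).

Lemma rv_inj a b : rv a = rv b -> a = b.
Proof. intro H. apply Qc_is_canon. apply eqR_Qeq. exact H. Qed.

Lemma rv_Q2Qc q : rv (Q2Qc q) = Q2R q.
Proof. unfold rv. simpl. apply Qeq_eqR. apply Qred_correct. Qed.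

Lemma rv_plus a b : rv (Qcplus a b) = (rv a + rv b)%R.
Proof. unfold Qcplus. rewrite rv_Q2Qc. unfold rv. apply Q2R_plus. Qed.

Lemma rv_opp a : rv (Qcopp a) = (- rv a)%R.
Proof. unfold Qcopp. rewrite rv_Q2Qc. unfold rv. apply Q2R_opp. Qed.

Lemma rv_minus a b : rv (Qcminus a b) = (rv a - rv b)%R.
Proof. unfold Qcminus. rewrite rv_plus, rv_opp. lra. Qed.

Lemma rv0 : rv (Q2Qc 0) = 0%R.
Proof. rewrite rv_Q2Qc. unfold Q2R. simpl. lra. Qed.
Lemma rv1 : rv (Q2Qc 1) = 1%R.
Proof. rewrite rv_Q2Qc. unfold Q2R. simpl. lra. Qed.

Lemma unitQ_iff r : unitQ r <-> (0 <= rv r <= 1)%R.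
Proof.
  unfold unitQ, Qcle. rewrite <- rv0, <- rv1. unfold rv. split.
  - intros [H1 H2]. split; apply Qle_Rle; assumption.
  - intros [H1 H2]. split; apply Rle_Qle; assumption.
Qed.

Lemma Q_dense_R (a b : R) : (a < b)%R -> exists q : Q, (a < Q2R q < b)%R.
Proof.
  intro Hab.
  set (n := up (/ (b - a))).
  destruct (archimed (/ (b - a))) as [H1 H2].
  assert (Hpos : (0 < / (b - a))%R) by (apply Rinv_0_lt_compat; lra).
  assert (Hn : (0 < IZR n)%R) by (unfold n; lra).
  set (k := up (a * IZR n)).
  destruct (archimed (a * IZR n)) as [K1 K2].
  assert (Hnz : (0 < n)%Z) by (apply lt_IZR; exact Hn).
  exists (Qmake k (Z.to_pos n)).
  unfold Q2R. simpl. rewrite Z2Pos.id by lia.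
  fold k in K1, K2.
  assert (Hn2 : (IZR n * (b - a) > 1)%R).
  { assert (IZR n > / (b-a))%R by (unfold n; lra).
    apply Rmult_gt_compat_r with (r := (b-a)%R) in H; [|lra].
    rewrite Rinv_l in H; lra. }
  split.
  - apply Rmult_lt_reg_r with (r := IZR n); [lra|].
    rewrite Rmult_assoc, Rinv_l by lra. lra.
  - apply Rmult_lt_reg_r with (r := IZR n); [lra|].
    rewrite Rmult_assoc, Rinv_l by lra. nra.
Qed.

Lemma Qc_dense (a b : R) : (0 <= a)%R -> (a < b)%R -> (b <= 1)%R ->
  exists r : Qc, unitQ r /\ (a < rv r < b)%R.
Proof.
  intros Ha Hab Hb. destruct (Q_dense_R a b Hab) as [q Hq].
  exists (Q2Qc q). rewrite unitQ_iff, rv_Q2Qc. lra.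
Qed.

Section MV.
Context {A : MVAlg}.
Local Notation "x ⊕ y" := (mplus A x y) (at level 50, left associativity).
Local Notation "¬ x" := (mneg A x) (at level 35, right associativity).
Local Notation "0" := (mzero A).
Local Notation "1" := (@mone A).
Local Notation "x ⊙ y" := (mmul x y) (at level 40, left associativity).
Local Notation "x ≤ y" := (mle x y) (at level 70).
Implicit Types x y z u v a b c d w m : A.

Lemma pA x y z : x ⊕ (y ⊕ z) = x ⊕ y ⊕ z. Proof. apply mplus_assoc. Qed.
Lemma pC x y : x ⊕ y = y ⊕ x. Proof. apply mplus_comm. Qed.
Lemma p0 x : x ⊕ 0 = x. Proof. apply mplus_zero. Qed.
Lemma nn x : ¬ ¬ x = x. Proof. apply mneg_neg. Qed.
Lemma p1 x : x ⊕ 1 = 1. Proof. apply mplus_one. Qed.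
Lemma luk x y : ¬ (¬ x ⊕ y) ⊕ y = ¬ (¬ y ⊕ x) ⊕ x. Proof. apply mluk. Qed.
Lemma p0l x : 0 ⊕ x = x. Proof. rewrite pC; apply p0. Qed.
Lemma p1l x : 1 ⊕ x = 1. Proof. rewrite pC; apply p1. Qed.
Lemma n1 : ¬ 1 = 0. Proof. unfold mone. apply nn. Qed.
Lemma n0 : ¬ 0 = 1. Proof. reflexivity. Qed.
Lemma pneg x : x ⊕ ¬ x = 1.
Proof.
  pose proof (luk x 1) as H. rewrite !p1 in H. rewrite n1, p0l in H.
  rewrite pC. auto.
Qed.
Lemma pnegl x : ¬ x ⊕ x = 1. Proof. rewrite pC; apply pneg. Qed.
Lemma nneg_inj x y : ¬ x = ¬ y -> x = y.
Proof. intro H. rewrite <- (nn x), <- (nn y), H. reflexivity. Qed.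

Lemma le_refl x : x ≤ x. Proof. unfold mle. apply pnegl. Qed.
Lemma le_ex x y : x ≤ y <-> exists z, x ⊕ z = y.
Proof.
  unfold mle; split.
  - intro H. exists (¬ (¬ y ⊕ x)).
    pose proof (luk x y) as L. rewrite H, n1, p0l in L. rewrite pC. auto.
  - intros [z <-]. rewrite pA, pnegl, p1l. reflexivity.
Qed.
Lemma le_trans x y z : x ≤ y -> y ≤ z -> x ≤ z.
Proof.
  rewrite !le_ex. intros [a <-] [b <-]. exists (a ⊕ b). apply pA.
Qed.
Lemma join_def x y : mjoin x y = ¬ (¬ x ⊕ y) ⊕ y. Proof. reflexivity. Qed.
Lemma join_comm x y : mjoin x y = mjoin y x. Proof. unfold mjoin. apply luk. Qed.
Lemma join_le x y : x ≤ y -> mjoin x y = y.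
Proof. unfold mle, mjoin. intro H. rewrite H, n1, p0l. reflexivity. Qed.
Lemma le_antisym x y : x ≤ y -> y ≤ x -> x = y.
Proof.
  intros H1 H2. rewrite <- (join_le _ _ H1), join_comm. symmetry. apply join_le; auto.
Qed.
Lemma le_plus x y z : x ≤ y -> x ⊕ z ≤ y ⊕ z.
Proof.
  rewrite !le_ex. intros [a <-]. exists a. rewrite <- !pA, (pC z a). reflexivity.
Qed.
Lemma le_plus_r x y z : x ≤ y -> z ⊕ x ≤ z ⊕ y.
Proof. intro H. rewrite (pC z x), (pC z y). apply le_plus; auto. Qed.
Lemma le_plus2 x y u v : x ≤ y -> u ≤ v -> x ⊕ u ≤ y ⊕ v.
Proof. intros H1 H2. apply le_trans with (y ⊕ u). apply le_plus; auto. apply le_plus_r; auto. Qed.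
Lemma le_neg x y : x ≤ y -> ¬ y ≤ ¬ x.
Proof. unfold mle. intro H. rewrite nn, pC. auto. Qed.
Lemma le_neg_iff x y : ¬ y ≤ ¬ x <-> x ≤ y.
Proof. split; [intro H; apply le_neg in H; rewrite !nn in H; auto | apply le_neg]. Qed.
Lemma le_0 x : 0 ≤ x. Proof. unfold mle. rewrite n0, p1l. reflexivity. Qed.
Lemma le_1 x : x ≤ 1. Proof. unfold mle. apply p1. Qed.
Lemma le_pl x y : x ≤ x ⊕ y. Proof. apply le_ex. eauto. Qed.
Lemma le_pr x y : y ≤ x ⊕ y. Proof. rewrite pC. apply le_pl. Qed.
Lemma le1_eq x : 1 ≤ x -> x = 1. Proof. intro H. apply le_antisym; auto using le_1. Qed.
Lemma le0_eq x : x ≤ 0 -> x = 0. Proof. intro H. apply le_antisym; auto using le_0. Qed.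

Lemma mul_def x y : x ⊙ y = ¬ (¬ x ⊕ ¬ y). Proof. reflexivity. Qed.
Lemma mC x y : x ⊙ y = y ⊙ x. Proof. unfold mmul. rewrite pC. reflexivity. Qed.
Lemma mA x y z : x ⊙ (y ⊙ z) = x ⊙ y ⊙ z.
Proof. unfold mmul. rewrite !nn, pA. reflexivity. Qed.
Lemma m1 x : x ⊙ 1 = x. Proof. unfold mmul. rewrite n1, p0, nn. reflexivity. Qed.
Lemma m1l x : 1 ⊙ x = x. Proof. rewrite mC; apply m1. Qed.
Lemma m0 x : x ⊙ 0 = 0. Proof. unfold mmul. rewrite n0, p1, n1. reflexivity. Qed.
Lemma mulneg x : x ⊙ ¬ x = 0. Proof. unfold mmul. rewrite nn, pnegl, n1. reflexivity. Qed.
Lemma neg_plus x y : ¬ (x ⊕ y) = ¬ x ⊙ ¬ y. Proof. unfold mmul. rewrite !nn. reflexivity. Qed.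
Lemma neg_mul x y : ¬ (x ⊙ y) = ¬ x ⊕ ¬ y. Proof. unfold mmul. rewrite nn. reflexivity. Qed.
Lemma le_mul x y z : x ≤ y -> x ⊙ z ≤ y ⊙ z.
Proof. intro H. unfold mmul. apply le_neg. apply le_plus. apply le_neg. auto. Qed.
Lemma le_mul_r x y z : x ≤ y -> z ⊙ x ≤ z ⊙ y.
Proof. intro H. rewrite (mC z x), (mC z y). apply le_mul; auto. Qed.
Lemma le_mul2 x y u v : x ≤ y -> u ≤ v -> x ⊙ u ≤ y ⊙ v.
Proof. intros H1 H2. apply le_trans with (y ⊙ u). apply le_mul; auto. apply le_mul_r; auto. Qed.
Lemma resid x y z : x ⊙ y ≤ z <-> x ≤ ¬ y ⊕ z.
Proof. unfold mle. rewrite neg_mul, pA. tauto. Qed.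
Lemma le_ml x y : x ⊙ y ≤ x.
Proof. apply resid. rewrite pC. apply le_pl. Qed.
Lemma le_mr x y : x ⊙ y ≤ y. Proof. rewrite mC. apply le_ml. Qed.
Lemma le_mul0 x y : x ⊙ y = 0 <-> x ≤ ¬ y.
Proof. split; intro H.
  - rewrite <- (p0 (¬ y)). apply resid. rewrite H. apply le_refl.
  - apply le0_eq. apply resid. rewrite p0. auto. Qed.

Lemma join_ubr x y : y ≤ mjoin x y. Proof. unfold mjoin. apply le_pr. Qed.
Lemma join_ubl x y : x ≤ mjoin x y. Proof. rewrite join_comm. apply join_ubr. Qed.
Lemma join_alt x y : mjoin x y = (x ⊙ ¬ y) ⊕ y. Proof. unfold mjoin, mmul. rewrite nn. reflexivity. Qed.
Lemma join_lub x y z : x ≤ z -> y ≤ z -> mjoin x y ≤ z.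
Proof.
  intros H1 H2. rewrite join_alt.
  assert (E : z = (z ⊙ ¬ y) ⊕ y).
  { rewrite <- join_alt, join_comm, join_le; auto. }
  rewrite E. apply le_plus. apply le_mul. auto.
Qed.
Lemma meet_def x y : mmeet x y = ¬ mjoin (¬ x) (¬ y). Proof. reflexivity. Qed.
Lemma meet_lbl x y : mmeet x y ≤ x.
Proof. unfold mmeet. rewrite <- le_neg_iff, !nn. apply join_ubl. Qed.
Lemma meet_lbr x y : mmeet x y ≤ y.
Proof. unfold mmeet. rewrite <- le_neg_iff, !nn. apply join_ubr. Qed.
Lemma meet_glb x y z : z ≤ x -> z ≤ y -> z ≤ mmeet x y.
Proof. intros H1 H2. unfold mmeet. rewrite <- le_neg_iff, nn. apply join_lub; apply le_neg; auto. Qed.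
Lemma meet_comm x y : mmeet x y = mmeet y x. Proof. unfold mmeet. rewrite join_comm. reflexivity. Qed.
Lemma meet_formula x y : mmeet x y = x ⊙ (¬ x ⊕ y).
Proof.
  unfold mmeet. rewrite join_comm. unfold mjoin, mmul. rewrite !nn.
  f_equal. rewrite pC. f_equal. f_equal. apply pC.
Qed.
Lemma meet_le x y : x ≤ y -> mmeet x y = x.
Proof. intro H. apply le_antisym. apply meet_lbl. apply meet_glb; auto using le_refl. Qed.
Lemma join_mono x y u v : x ≤ y -> u ≤ v -> mjoin x u ≤ mjoin y v.
Proof. intros. apply join_lub; eapply le_trans; eauto using join_ubl, join_ubr. Qed.
Lemma mul_join x y z : x ⊙ mjoin y z ≤ mjoin (x ⊙ y) (x ⊙ z).
Proof.
  rewrite mC. apply resid. apply join_lub; apply resid; rewrite mC.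
  apply join_ubl. apply join_ubr.
Qed.
Lemma mul_impl x y : x ⊙ (¬ x ⊕ y) ≤ y.
Proof. rewrite <- meet_formula. apply meet_lbr. Qed.

Lemma prelin0 x y : mmeet (x ⊙ ¬ y) (y ⊙ ¬ x) = 0.
Proof.
  set (m := mmeet x y). set (d1 := x ⊙ ¬ y). set (d2 := y ⊙ ¬ x).
  set (w := mmeet d1 d2).
  assert (Hx : x = m ⊕ d1).
  { unfold m, d1. rewrite meet_formula.
    assert (E : x ⊙ ¬ y = ¬ (¬ x ⊕ y)) by (unfold mmul; rewrite nn; reflexivity).
    rewrite E. rewrite <- (nn (¬ x ⊕ y)) at 1.
    rewrite <- join_alt. rewrite join_comm, join_le; auto. rewrite <- E. apply le_ml. }
  assert (Hy : y = m ⊕ d2).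
  { unfold m, d2. rewrite meet_comm, meet_formula.
    assert (E : y ⊙ ¬ x = ¬ (¬ y ⊕ x)) by (unfold mmul; rewrite nn; reflexivity).
    rewrite E. rewrite <- (nn (¬ y ⊕ x)) at 1.
    rewrite <- join_alt. rewrite join_comm, join_le; auto. rewrite <- E. apply le_ml. }
  assert (Hmw : m ⊕ w ≤ m).
  { apply meet_glb.
    - apply le_trans with (m ⊕ d1); [apply le_plus_r, meet_lbl | rewrite <- Hx; apply le_refl].
    - apply le_trans with (m ⊕ d2); [apply le_plus_r, meet_lbr | rewrite <- Hy; apply le_refl]. }
  assert (Hwm : w ≤ ¬ m).
  { unfold m. unfold mmeet. rewrite nn. apply le_trans with d1. apply meet_lbl.
    apply le_trans with (¬ y). apply le_mr. apply join_ubr. }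
  apply le0_eq. rewrite <- (meet_le _ _ Hwm), meet_comm, meet_formula, nn.
  rewrite <- (mulneg m), (mC m). apply le_mul_r. auto.
Qed.

Lemma prelin x y : mjoin (mimp x y) (mimp y x) = 1.
Proof.
  unfold mimp. rewrite <- (nn (mjoin _ _)).
  assert (E : ¬ mjoin (¬ x ⊕ y) (¬ y ⊕ x) = mmeet (x ⊙ ¬ y) (y ⊙ ¬ x)).
  { unfold mmeet. f_equal. unfold mmul. rewrite !nn. reflexivity. }
  rewrite E, prelin0. reflexivity.
Qed.

Fixpoint pw (x : A) (n : nat) : A := match n with O => 1 | S k => x ⊙ pw x k end.

Lemma join_pow a b n : mjoin a b = 1 -> mjoin (pw a n) b = 1.
Proof.
  intro H. induction n as [|n IH]; simpl.
  - apply le1_eq. apply join_ubl.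
  - apply le1_eq. rewrite <- H. apply join_lub; [|apply join_ubr].
    rewrite <- (m1 a) at 1. rewrite <- IH.
    eapply le_trans. apply mul_join. apply join_mono. apply le_refl. apply le_mr.
Qed.
Lemma join_plus a b : mjoin a b ≤ a ⊕ b. Proof. apply join_lub. apply le_pl. apply le_pr. Qed.

Lemma resid1 x y z : x ⊙ y ≤ z -> x ≤ ¬ y ⊕ z. Proof. apply resid. Qed.
Lemma resid2 x y z : x ≤ ¬ y ⊕ z -> x ⊙ y ≤ z. Proof. apply resid. Qed.

Lemma imp_trans x y z : mimp x y ⊙ mimp y z ≤ mimp x z.
Proof.
  unfold mimp. apply resid1.
  rewrite <- mA, (mC (¬ y ⊕ z) x), mA, (mC (¬ x ⊕ y) x).
  apply le_trans with (y ⊙ (¬ y ⊕ z)). apply le_mul. apply mul_impl. apply mul_impl.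
Qed.
Lemma imp_mul a b c d : mimp a b ⊙ mimp c d ≤ mimp (a ⊙ c) (b ⊙ d).
Proof.
  unfold mimp. apply resid1.
  rewrite (mA _ a c), <- (mA _ _ a), (mC (¬ c ⊕ d) a), (mA _ a), (mC (¬ a ⊕ b) a), <- mA.
  apply le_mul2. apply mul_impl. rewrite mC. apply mul_impl.
Qed.
Lemma imp_plus_aux a b c : mimp a b ⊙ (a ⊕ c) ≤ b ⊕ c.
Proof.
  apply resid2. unfold mimp. rewrite neg_plus.
  assert (E : (¬ a ⊙ ¬ c) ⊕ (b ⊕ c) = mjoin (¬ a) c ⊕ b).
  { rewrite join_alt. rewrite <- !pA. rewrite (pC b c). reflexivity. }
  rewrite E. apply le_plus. apply join_ubl.
Qed.
Lemma imp_plus a b c d : mimp a b ⊙ mimp c d ≤ mimp (a ⊕ c) (b ⊕ d).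
Proof.
  unfold mimp at 3. apply resid1. rewrite <- mA, (mC (mimp c d)), mA.
  apply le_trans with (mimp c d ⊙ (c ⊕ b)).
  - rewrite (mC (mimp c d)). apply le_mul. rewrite (pC c b). apply imp_plus_aux.
  - rewrite (pC b d). apply imp_plus_aux.
Qed.
Lemma imp_one x y : mimp x y = 1 <-> x ≤ y. Proof. reflexivity. Qed.
Lemma pw_le a b n : a ≤ b -> pw a n ≤ pw b n.
Proof. intro H. induction n; simpl. apply le_refl. apply le_mul2; auto. Qed.
Lemma pw_mul a b n : pw (a ⊙ b) n = pw a n ⊙ pw b n.
Proof.
  induction n; simpl. rewrite m1. reflexivity.
  rewrite IHn. rewrite <- !mA. f_equal. rewrite !mA. f_equal. apply mC.
Qed.
Lemma imp_pw a b n : pw (mimp a b) n ≤ mimp (pw a n) (pw b n).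
Proof.
  induction n; simpl. unfold mimp. rewrite n1, p0l. apply le_refl.
  eapply le_trans. apply le_mul_r. apply IHn. apply imp_mul.
Qed.
End MV.

Section Filt.
Context {A : MVAlg}.
Local Notation "x ⊕ y" := (mplus A x y) (at level 50, left associativity).
Local Notation "¬ x" := (mneg A x) (at level 35, right associativity).
Local Notation "0" := (mzero A).
Local Notation "1" := (@mone A).
Local Notation "x ⊙ y" := (mmul x y) (at level 40, left associativity).
Local Notation "x ≤ y" := (mle x y) (at level 70).
Implicit Types x y z u v a b c d w m : A.

Lemma pw_add z n k : pw z (n + k) = pw z n ⊙ pw z k.
Proof. induction n; simpl. rewrite m1l; auto. rewrite IHn, mA. auto. Qed.

Lemma filter_up (F : A -> Prop) x y : is_filter A F -> F x -> x ≤ y -> F y.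
Proof. intros [_ [H _]]. eauto. Qed.
Lemma filter_mul (F : A -> Prop) x y : is_filter A F -> F x -> F y -> F (x ⊙ y).
Proof. intros [_ [_ H]]. eauto. Qed.
Lemma filter_one (F : A -> Prop) : is_filter A F -> F 1.
Proof. intros [H _]. auto. Qed.
Lemma filter_pw (F : A -> Prop) x n : is_filter A F -> F x -> F (pw x n).
Proof. intros HF Hx. induction n; simpl. apply filter_one; auto. apply filter_mul; auto. Qed.
Lemma filter_mp (F : A -> Prop) x y : is_filter A F -> F x -> F (mimp x y) -> F y.
Proof.
  intros HF H1 H2. apply filter_up with (x ⊙ mimp x y); auto. apply filter_mul; auto.
  apply mul_impl.
Qed.
Lemma filter_trans (F : A -> Prop) x y z : is_filter A F -> F (mimp x y) -> F (mimp y z) -> F (mimp x z).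
Proof. intros HF H1 H2. apply filter_up with (mimp x y ⊙ mimp y z); auto. apply filter_mul; auto. apply imp_trans. Qed.

Lemma max_not0 (M : A -> Prop) : maximal_filter A M -> ~ M 0.
Proof. intros [[_ H] _]. auto. Qed.
Lemma max_filter (M : A -> Prop) : maximal_filter A M -> is_filter A M.
Proof. intros [[H _] _]. auto. Qed.

Lemma max_gen (M : A -> Prop) z : maximal_filter A M -> ~ M z -> exists n, M (¬ pw z n).
Proof.
  intros HM Hz. pose proof (max_filter M HM) as HF.
  set (G := fun x => exists m n, M m /\ m ⊙ pw z n ≤ x).
  assert (HG : is_filter A G).
  { split; [|split].
    - exists 1, O. split. apply filter_one; auto. simpl. rewrite m1. apply le_refl.
    - intros x y [m [n [Hm Hle]]] Hxy. exists m, n. split; auto. eapply le_trans; eauto.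
    - intros x y [m [n [Hm H1]]] [m' [n' [Hm' H2]]]. exists (m ⊙ m'), (n + n')%nat.
      split. apply filter_mul; auto. rewrite pw_add.
      eapply le_trans; [|apply le_mul2; [exact H1|exact H2]].
      rewrite <- !mA. rewrite (mA m' (pw z n)), (mC m' (pw z n)), <- (mA (pw z n)).
      apply le_refl. }
  destruct (classic (G 0)) as [[m [n [Hm Hle]]]|HG0].
  - exists n. eapply filter_up; eauto. rewrite <- (p0 (¬ pw z n)). apply resid1. auto.
  - exfalso. apply Hz. destruct HM as [_ HM]. apply (HM G). split; auto.
    + intros x Hx. exists x, O. split; auto. simpl. rewrite m1. apply le_refl.
    + exists 1, 1%nat. split. apply filter_one; auto. simpl. rewrite m1, m1l. apply le_refl.
Qed.

Lemma max_prime (M : A -> Prop) x y : maximal_filter A M -> M (mimp x y) \/ M (mimp y x).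
Proof.
  intro HM. pose proof (max_filter M HM) as HF.
  destruct (classic (M (mimp x y))) as [H|H1]; auto.
  destruct (classic (M (mimp y x))) as [H|H2]; auto.
  exfalso. destruct (max_gen M _ HM H1) as [n Hn]. destruct (max_gen M _ HM H2) as [k Hk].
  apply (max_not0 M HM).
  assert (E : ¬ pw (mimp x y) n ⊙ ¬ pw (mimp y x) k = 0).
  { rewrite <- neg_plus. rewrite <- n1. f_equal. apply le1_eq.
    eapply le_trans; [|apply join_plus].
    pose proof (join_pow _ _ n (prelin x y)) as J1. rewrite join_comm in J1.
    pose proof (join_pow _ _ k J1) as J2. rewrite join_comm, J2. apply le_refl. }
  rewrite <- E. apply filter_mul; auto.
Qed.
End Filt.

Section Const.
Context {A : Pavelka}.
Local Notation "x ⊕ y" := (mplus A x y) (at level 50, left associativity).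
Local Notation "¬ x" := (mneg A x) (at level 35, right associativity).
Local Notation "0" := (mzero A).
Local Notation "1" := (@mone A).
Local Notation "x ⊙ y" := (mmul x y) (at level 40, left associativity).
Local Notation "x ≤ y" := (mle x y) (at level 70).
Implicit Types x y z a b m : A.
Local Notation c := (pconst A).
Local Notation Q0 := (Q2Qc 0).
Local Notation Q1 := (Q2Qc 1).

Lemma uQ r : unitQ r -> (0 <= rv r <= 1)%R. Proof. apply unitQ_iff. Qed.
Lemma Qu r : (0 <= rv r <= 1)%R -> unitQ r. Proof. apply unitQ_iff. Qed.

Lemma czero : c Q0 = 0. Proof. apply pconst_zero. Qed.
Lemma cneg r : unitQ r -> ¬ c r = c (Qcminus Q1 r). Proof. apply pconst_neg. Qed.
Lemma cone : c Q1 = 1.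
Proof.
  unfold mone. rewrite <- czero, cneg.
  all: try (f_equal; apply rv_inj; rewrite rv_minus, rv0, rv1; lra).
  all: try (apply Qu; rewrite rv0; lra).
Qed.
Lemma cplus r s : unitQ r -> unitQ s -> (rv r + rv s <= 1)%R -> c r ⊕ c s = c (Qcplus r s).
Proof.
  intros Hr Hs H. apply pconst_plus_lt; auto. unfold Qcle. apply Rle_Qle.
  fold (rv (Qcplus r s)). fold (rv Q1). rewrite rv_plus, rv1. auto.
Qed.
Lemma cplus1 r s : unitQ r -> unitQ s -> (1 <= rv r + rv s)%R -> c r ⊕ c s = 1.
Proof.
  intros Hr Hs H. rewrite <- cone. apply pconst_plus_ge; auto. unfold Qcle. apply Rle_Qle.
  fold (rv (Qcplus r s)). fold (rv Q1). rewrite rv_plus, rv1. auto.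
Qed.

Definition qc (x : R) (H : exists r, rv r = x) := x.

Lemma cneg' r s : unitQ r -> (rv s = 1 - rv r)%R -> ¬ c r = c s.
Proof. intros Hr Hs. rewrite cneg; auto. f_equal. apply rv_inj. rewrite rv_minus, rv1. lra. Qed.

Lemma ex_q (x : R) (r s : Qc) : (x = rv r + rv s)%R -> exists t, rv t = x.
Proof. intro. exists (Qcplus r s). rewrite rv_plus. auto. Qed.

Lemma cplus' r s t : unitQ r -> unitQ s -> (rv t = rv r + rv s)%R -> (rv t <= 1)%R -> c r ⊕ c s = c t.
Proof.
  intros Hr Hs Ht H1. rewrite cplus; auto; [|lra]. f_equal. apply rv_inj. rewrite rv_plus. lra.
Qed.

Lemma cmul r s t : unitQ r -> unitQ s -> (rv t = rv r + rv s - 1)%R -> (1 <= rv r + rv s)%R -> c r ⊙ c s = c t.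
Proof.
  intros Hr Hs Ht H. pose proof (uQ _ Hr). pose proof (uQ _ Hs).
  unfold mmul. rewrite (cneg r), (cneg s); auto.
  rewrite (cplus' _ _ (Qcminus Q1 t)).
  - rewrite cneg. f_equal. apply rv_inj. rewrite !rv_minus, rv1. lra.
    apply Qu. rewrite rv_minus, rv1. lra.
  - apply Qu. rewrite rv_minus, rv1. lra.
  - apply Qu. rewrite rv_minus, rv1. lra.
  - rewrite !rv_minus, rv1. lra.
  - rewrite !rv_minus, rv1. lra.
Qed.
Lemma cmul0 r s : unitQ r -> unitQ s -> (rv r + rv s <= 1)%R -> c r ⊙ c s = 0.
Proof.
  intros Hr Hs H. pose proof (uQ _ Hr). pose proof (uQ _ Hs).
  unfold mmul. rewrite (cneg r), (cneg s); auto. rewrite cplus1. apply n1.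
  - apply Qu. rewrite rv_minus, rv1. lra.
  - apply Qu. rewrite rv_minus, rv1. lra.
  - rewrite !rv_minus, rv1. lra.
Qed.
Lemma c_le r s : unitQ r -> unitQ s -> (rv r <= rv s)%R -> c r ≤ c s.
Proof.
  intros Hr Hs H. pose proof (uQ _ Hr). pose proof (uQ _ Hs). unfold mle.
  rewrite cneg; auto. apply cplus1; auto. apply Qu. rewrite rv_minus, rv1. lra.
  rewrite rv_minus, rv1. lra.
Qed.

Lemma c_in_max_lt1 (M : A -> Prop) u : maximal_filter A M -> unitQ u -> (rv u < 1)%R -> M (c u) -> False.
Proof.
  intros HM Hu Hlt HMu. pose proof (max_filter M HM) as HF.
  assert (K : forall k : nat, forall u, unitQ u -> (INR (S k) * (1 - rv u) >= 1)%R -> M (c u) -> False).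
  { induction k as [|k IH]; intros v Hv Hk HMv.
    - simpl in Hk. pose proof (uQ _ Hv). assert (E : v = Q0) by (apply rv_inj; rewrite rv0; lra).
      subst v. rewrite czero in HMv. apply (max_not0 M HM). auto.
    - pose proof (uQ _ Hv). destruct (Rle_dec (rv v + rv v) 1) as [Hle|Hgt].
      + apply (max_not0 M HM). rewrite <- (cmul0 v v); auto. apply filter_mul; auto.
      + set (v' := Qcminus (Qcplus v v) Q1).
        assert (Hv' : rv v' = (rv v + rv v - 1)%R) by (unfold v'; rewrite rv_minus, rv_plus, rv1; lra).
        apply (IH v').
        * apply Qu. lra.
        * rewrite Hv'. rewrite !S_INR in Hk. rewrite S_INR. pose proof (pos_INR k). nra.
        * rewrite <- (cmul v v); auto; [|lra]. apply filter_mul; auto. }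
  destruct (INR_unbounded (/ (1 - rv u))) as [n Hn].
  apply (K n u); auto. rewrite S_INR.
  assert (0 < 1 - rv u)%R by lra.
  assert (INR n * (1 - rv u) > 1)%R.
  { apply Rmult_gt_compat_r with (r := (1 - rv u)%R) in Hn; auto. rewrite Rinv_l in Hn; lra. }
  nra.
Qed.

Lemma imp_const (M : A -> Prop) r s : maximal_filter A M -> unitQ r -> unitQ s ->
  M (mimp (c r) (c s)) -> (rv r <= rv s)%R.
Proof.
  intros HM Hr Hs H. pose proof (uQ _ Hr). pose proof (uQ _ Hs).
  destruct (Rle_dec (rv r) (rv s)) as [|Hgt]; auto. exfalso.
  set (t := Qcplus (Qcminus Q1 r) s).
  assert (Ht : rv t = (1 - rv r + rv s)%R) by (unfold t; rewrite rv_plus, rv_minus, rv1; lra).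
  apply (c_in_max_lt1 M t HM). apply Qu; lra. lra.
  unfold mimp in H. rewrite cneg in H; auto. rewrite (cplus' _ _ t) in H; auto.
  apply Qu. rewrite rv_minus, rv1. lra. rewrite rv_minus, rv1. lra. lra.
Qed.
End Const.

Section Holder.
Context {A : Pavelka} (M : A -> Prop) (HM : maximal_filter A M).
Local Notation "x ⊕ y" := (mplus A x y) (at level 50, left associativity).
Local Notation "¬ x" := (mneg A x) (at level 35, right associativity).
Local Notation "0" := (mzero A).
Local Notation "1" := (@mone A).
Local Notation "x ⊙ y" := (mmul x y) (at level 40, left associativity).
Local Notation "x ≤ y" := (mle x y) (at level 70).
Implicit Types x y z a b m : A.
Local Notation c := (pconst A).
Local Notation Q0 := (Q2Qc 0).
Local Notation Q1 := (Q2Qc 1).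

Let HF : is_filter A M := max_filter M HM.

Definition Lset x := fun t => exists r, unitQ r /\ t = rv r /\ M (mimp (c r) x).
Lemma L_bound x : bound (Lset x).
Proof. exists 1%R. intros t [r [Hr [-> _]]]. apply uQ; auto. Qed.
Lemma L_ne x : Lset x 0%R.
Proof.
  exists Q0. split. apply Qu. rewrite rv0. lra. split. rewrite rv0; auto.
  unfold mimp. rewrite czero, n0, p1l. apply filter_one; auto.
Qed.
Definition hM x : R := proj1_sig (completeness (Lset x) (L_bound x) (ex_intro _ 0%R (L_ne x))).
Lemma hM_lub x : is_lub (Lset x) (hM x).
Proof. unfold hM. destruct (completeness _ _ _). auto. Qed.

Lemma H_L x r : unitQ r -> M (mimp (c r) x) -> (rv r <= hM x)%R.
Proof. intros Hr H. apply (proj1 (hM_lub x)). exists r. auto. Qed.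
Lemma H_U x r : unitQ r -> M (mimp x (c r)) -> (hM x <= rv r)%R.
Proof.
  intros Hr H. apply (proj2 (hM_lub x)). intros t [r' [Hr' [-> H']]].
  apply (imp_const M r' r HM); auto. eapply filter_trans; eauto.
Qed.
Lemma H_01 x : (0 <= hM x <= 1)%R.
Proof.
  split. apply (proj1 (hM_lub x)). apply L_ne.
  apply (proj2 (hM_lub x)). intros t [r [Hr [-> _]]]. apply uQ; auto.
Qed.
Lemma H_gt x r : unitQ r -> (rv r < hM x)%R -> M (mimp (c r) x).
Proof.
  intros Hr H. destruct (max_prime M (c r) x HM) as [|H2]; auto.
  apply H_U in H2; auto. lra.
Qed.
Lemma H_lt x r : unitQ r -> (hM x < rv r)%R -> M (mimp x (c r)).
Proof.
  intros Hr H. destruct (max_prime M x (c r) HM) as [|H2]; auto.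
  apply H_L in H2; auto. lra.
Qed.

Lemma imp_c_neg x r : unitQ r -> mimp (c r) (¬ x) = mimp x (c (Qcminus Q1 r)).
Proof. intro Hr. unfold mimp. rewrite <- cneg; auto. apply pC. Qed.
Lemma imp_neg_c x r : unitQ r -> mimp (¬ x) (c r) = mimp (c (Qcminus Q1 r)) x.
Proof.
  intro Hr. pose proof (uQ _ Hr). unfold mimp. rewrite nn.
  rewrite (cneg' _ r). apply pC. apply Qu. rewrite rv_minus, rv1. lra.
  rewrite rv_minus, rv1. lra.
Qed.

Lemma H_neg x : hM (¬ x) = (1 - hM x)%R.
Proof.
  pose proof (H_01 x). pose proof (H_01 (¬ x)).
  apply Rle_antisym; apply Rnot_lt_le; intro Hc.
  - destruct (Qc_dense (1 - hM x) (hM (¬ x))) as [r [Hr Hr2]]; try lra.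
    pose proof (H_gt _ _ Hr (proj2 Hr2)) as H1. rewrite imp_c_neg in H1; auto.
    apply H_U in H1. rewrite rv_minus, rv1 in H1. lra.
    pose proof (uQ _ Hr). apply Qu. rewrite rv_minus, rv1. lra.
  - destruct (Qc_dense (hM (¬ x)) (1 - hM x)) as [r [Hr Hr2]]; try lra.
    pose proof (H_lt _ _ Hr (proj1 Hr2)) as H1. rewrite imp_neg_c in H1; auto.
    apply H_L in H1. rewrite rv_minus, rv1 in H1. lra.
    pose proof (uQ _ Hr). apply Qu. rewrite rv_minus, rv1. lra.
Qed.

Lemma H_low x d : (0 < d)%R -> exists r, unitQ r /\ (hM x - d < rv r <= hM x)%R /\ M (mimp (c r) x).
Proof.
  intro Hd. pose proof (H_01 x).
  destruct (Rle_lt_dec (hM x) 0) as [H0|Hp].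
  - exists Q0. split. apply Qu; rewrite rv0; lra. split. rewrite rv0; lra.
    unfold mimp. rewrite czero, n0, p1l. apply filter_one; auto.
  - destruct (Qc_dense (Rmax 0 (hM x - d)) (hM x)) as [r [Hr Hr2]].
    apply Rmax_l. apply Rmax_lub_lt; lra. lra.
    exists r. split; auto. pose proof (Rmax_r 0 (hM x - d)). split. lra.
    apply H_gt; auto. lra.
Qed.
Lemma H_high x d : (0 < d)%R -> (hM x < 1)%R -> exists r, unitQ r /\ (hM x < rv r < hM x + d)%R /\ M (mimp x (c r)).
Proof.
  intros Hd H1. pose proof (H_01 x).
  destruct (Qc_dense (hM x) (Rmin 1 (hM x + d))) as [r [Hr Hr2]]. lra.
  apply Rmin_glb_lt; lra. apply Rmin_l.
  exists r. split; auto. pose proof (Rmin_r 1 (hM x + d)). split. lra.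
  apply H_lt; auto. lra.
Qed.

Lemma H_plus x y : hM (x ⊕ y) = Rmin (hM x + hM y) 1.
Proof.
  pose proof (H_01 x). pose proof (H_01 y). pose proof (H_01 (x ⊕ y)).
  apply Rle_antisym; apply Rnot_lt_le; intro Hc.
  -
    assert (Hs : (hM x + hM y < 1)%R).
    { destruct (Rle_dec (hM x + hM y) 1). 2: rewrite Rmin_right in Hc; lra.
      destruct (Req_dec (hM x + hM y) 1); [rewrite Rmin_right in Hc; lra|lra]. }
    rewrite Rmin_left in Hc by lra.
    set (d := ((hM (x ⊕ y) - (hM x + hM y)) / 4)%R).
    assert (Hd : (0 < d)%R) by (unfold d; lra).
    destruct (H_high x d Hd) as [r [Hr [Hr2 Hr3]]]. lra.
    destruct (H_high y d Hd) as [s [Hs' [Hs2 Hs3]]]. lra.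
    pose proof (uQ _ Hr). pose proof (uQ _ Hs').
    assert (Hrs : M (mimp (x ⊕ y) (c (Qcplus r s)))).
    { rewrite <- cplus; [| auto | auto | unfold d in *; lra].
      apply filter_up with (mimp x (c r) ⊙ mimp y (c s)); [exact HF| apply filter_mul; auto | apply imp_plus]. }
    apply H_U in Hrs. rewrite rv_plus in Hrs. unfold d in *. lra.
    apply Qu. rewrite rv_plus. unfold d in *. lra.
  - set (d := ((Rmin (hM x + hM y) 1 - hM (x ⊕ y)) / 4)%R).
    assert (Hd : (0 < d)%R) by (unfold d; lra).
    destruct (H_low x d Hd) as [r [Hr [Hr2 Hr3]]].
    destruct (H_low y d Hd) as [s [Hs' [Hs2 Hs3]]].
    pose proof (uQ _ Hr). pose proof (uQ _ Hs').
    assert (Hm : M (mimp (c r ⊕ c s) (x ⊕ y))).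
    { apply filter_up with (mimp (c r) x ⊙ mimp (c s) y); [exact HF| apply filter_mul; auto | apply imp_plus]. }
    destruct (Rle_dec (rv r + rv s) 1).
    + rewrite cplus in Hm; auto. apply H_L in Hm. rewrite rv_plus in Hm.
      pose proof (Rmin_l (hM x + hM y) 1). unfold d in *. lra.
      apply Qu. rewrite rv_plus. lra.
    + assert (E: c r ⊕ c s = c Q1) by (rewrite cone; apply cplus1; auto; lra).
      rewrite E in Hm. apply H_L in Hm; [|apply Qu; rewrite rv1; lra]. rewrite rv1 in Hm.
      pose proof (Rmin_r (hM x + hM y) 1). unfold d in *. lra.
Qed.

Lemma H_mul x y : hM (x ⊙ y) = (1 - Rmin (1 - hM x + (1 - hM y)) 1)%R.
Proof. unfold mmul. rewrite H_neg, H_plus, !H_neg. reflexivity. Qed.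

Lemma H_in x : M x -> hM x = 1%R.
Proof.
  intro H. pose proof (H_01 x). apply Rle_antisym. lra.
  rewrite <- rv1. apply H_L. apply Qu. rewrite rv1. lra.
  unfold mimp. rewrite cone, n1, p0l. auto.
Qed.

Lemma H_ker x : M x <-> hM x = 1%R.
Proof.
  split. apply H_in. intro H. apply NNPP. intro Hn.
  destruct (max_gen M x HM Hn) as [n Hn2].
  assert (Hp : forall k, hM (pw x k) = 1%R).
  { induction k as [|k IHk]; simpl. apply H_in. apply filter_one; auto.
    rewrite H_mul, H, IHk. rewrite Rmin_left; lra. }
  apply H_in in Hn2. rewrite H_neg, Hp in Hn2. lra.
Qed.
End Holder.

Definition ispoint (A : Pavelka) (h : A -> R) :=
  is_std_hom A h /\ maximal_filter A (fun z => h z = 1%R).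

Lemma max_ext (A : MVAlg) (P Q : A -> Prop) : (forall z, P z <-> Q z) ->
  maximal_filter A P -> maximal_filter A Q.
Proof.
  intros E [[[H1 [H2 H3]] H4] H5]. split; [split; [split; [|split]|]|].
  - apply E; auto.
  - intros x y Hx Hxy. apply E. apply E in Hx. eauto.
  - intros x y Hx Hy. apply E. apply E in Hx. apply E in Hy. eauto.
  - rewrite <- E. auto.
  - intros G HG HQG x Gx. apply E. apply (H5 G HG); auto. intros z Pz. apply HQG, E, Pz.
Qed.

Lemma holder_point (A : Pavelka) (M : A -> Prop) (HM : maximal_filter A M) :
  ispoint A (hM M HM) /\ (forall x, M x <-> hM M HM x = 1%R).
Proof.
  assert (Hk := H_ker M HM).
  split; auto. split.
  - split; [|split; [|split]].
    + apply H_01.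
    + intros. rewrite H_plus. reflexivity.
    + intros. rewrite H_neg. reflexivity.
    + rewrite <- (n1 (A:=A)). rewrite H_neg. rewrite (proj1 (Hk _)). lra.
      apply filter_one. apply max_filter; auto.
  - apply (max_ext _ M); auto.
Qed.

Section Pts.
Context {A : Pavelka} (h : A -> R) (Hh : is_std_hom A h).
Local Notation "x ⊕ y" := (mplus A x y) (at level 50, left associativity).
Local Notation "¬ x" := (mneg A x) (at level 35, right associativity).
Local Notation "0" := (mzero A).
Local Notation "1" := (@mone A).
Local Notation "x ⊙ y" := (mmul x y) (at level 40, left associativity).
Local Notation c := (pconst A).
Implicit Types x y z a b : A.

Lemma pt_range x : (0 <= h x <= 1)%R. Proof. apply Hh. Qed.
Lemma pt_plus x y : h (x ⊕ y) = Rmin (h x + h y) 1. Proof. apply Hh. Qed.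
Lemma pt_neg x : h (¬ x) = (1 - h x)%R. Proof. apply Hh. Qed.
Lemma pt_zero : h 0 = 0%R. Proof. apply Hh. Qed.
Lemma pt_one : h 1 = 1%R. Proof. unfold mone. rewrite pt_neg, pt_zero. lra. Qed.
Lemma pt_mul x y : h (x ⊙ y) = Rmax 0 (h x + h y - 1).
Proof.
  unfold mmul. rewrite pt_neg, pt_plus, !pt_neg.
  pose proof (pt_range x). pose proof (pt_range y).
  unfold Rmin, Rmax; repeat destruct Rle_dec; lra.
Qed.
Lemma pt_imp x y : h (mimp x y) = Rmin (1 - h x + h y) 1.
Proof. unfold mimp. rewrite pt_plus, pt_neg. reflexivity. Qed.
Lemma pt_join x y : h (mjoin x y) = Rmax (h x) (h y).
Proof.
  unfold mjoin. rewrite pt_plus, pt_neg, pt_plus, pt_neg.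
  pose proof (pt_range x). pose proof (pt_range y).
  unfold Rmin, Rmax; repeat destruct Rle_dec; lra.
Qed.
Lemma pt_meet x y : h (mmeet x y) = Rmin (h x) (h y).
Proof.
  unfold mmeet. rewrite pt_neg, pt_join, !pt_neg.
  pose proof (pt_range x). pose proof (pt_range y).
  unfold Rmin, Rmax; repeat destruct Rle_dec; lra.
Qed.
Lemma pt_le x y : mle x y -> (h x <= h y)%R.
Proof.
  unfold mle. intro H. pose proof (f_equal h H) as E. rewrite pt_plus, pt_neg, pt_one in E.
  pose proof (pt_range x). pose proof (pt_range y).
  unfold Rmin in E; destruct Rle_dec; lra.
Qed.

Lemma divle0 (a b : R) : (0 <= a)%R -> (0 < b)%R -> (0 <= a / b)%R.
Proof. intros. unfold Rdiv. apply Rmult_le_pos; auto. left. apply Rinv_0_lt_compat; auto. Qed.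
Lemma divle1 (a b : R) : (a <= b)%R -> (0 < b)%R -> (a / b <= 1)%R.
Proof.
  intros. unfold Rdiv. apply Rmult_le_reg_r with b; auto.
  rewrite Rmult_assoc, Rinv_l by lra. lra.
Qed.

Definition mkq (k : nat) (q : positive) : Qc := Q2Qc (Z.of_nat k # q).
Lemma rv_mkq k q : rv (mkq k q) = (INR k / IZR (Zpos q))%R.
Proof. unfold mkq. rewrite rv_Q2Qc. unfold Q2R. simpl. rewrite INR_IZR_INZ. reflexivity. Qed.

Lemma pt_const r : unitQ r -> h (c r) = rv r.
Proof.
  intro Hr. pose proof (uQ _ Hr) as Hr'.
  set (q := Qden (this r)). set (N := Pos.to_nat q).
  assert (HQ : IZR (Zpos q) = INR N) by (unfold N; rewrite INR_IZR_INZ, positive_nat_Z; auto).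
  assert (HN : (1 <= N)%nat) by (unfold N; lia).
  assert (HN' : (1 <= INR N)%R) by (apply (le_INR 1); auto).
  set (x := h (c (mkq 1 q))).
  assert (Hx := pt_range (c (mkq 1 q))). fold x in Hx.
  assert (Hu : forall k, (k <= N)%nat -> unitQ (mkq k q)).
  { intros k Hk. apply Qu. rewrite rv_mkq, HQ. pose proof (pos_INR k).
    apply le_INR in Hk. split. apply divle0; lra.
    apply divle1; lra. }
  assert (Cl : forall k, (k <= N)%nat -> h (c (mkq k q)) = Rmin (INR k * x) 1).
  { induction k as [|k IH]; intro Hk.
    - assert (E : mkq 0 q = Q2Qc 0) by (apply rv_inj; rewrite rv_mkq, rv0; simpl; lra).
      rewrite E, czero, pt_zero. simpl. rewrite Rmult_0_l, Rmin_left; lra.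
    - rewrite <- (cplus' (mkq k q) (mkq 1 q)).
      + rewrite pt_plus, IH by lia. fold x. rewrite S_INR. pose proof (pos_INR k).
        unfold Rmin; repeat destruct Rle_dec; nra.
      + apply Hu; lia.
      + apply Hu; lia.
      + rewrite !rv_mkq, S_INR. simpl. field. lra.
      + rewrite rv_mkq, HQ. apply le_INR in Hk. apply divle1; lra. }
  assert (HxN : x = (1 / INR N)%R).
  { pose proof (Cl N (le_n N)) as EN.
    assert (E1 : mkq N q = Q2Qc 1) by (apply rv_inj; rewrite rv_mkq, rv1, HQ; field; lra).
    rewrite E1, cone, pt_one in EN.
    destruct (Nat.eq_dec N 1) as [E|E].
    - unfold x. assert (E2 : mkq 1 q = Q2Qc 1) by (apply rv_inj; rewrite rv_mkq, rv1, HQ, E; simpl; field).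
      rewrite E2, cone, pt_one, E. simpl. lra.
    - assert (Hm := Cl (N - 1)%nat ltac:(lia)).
      rewrite <- (cneg' (mkq 1 q)) in Hm.
      + rewrite pt_neg in Hm. fold x in Hm. rewrite minus_INR in Hm by lia. simpl in Hm.
        assert (HNx : (INR N * x >= 1)%R) by (unfold Rmin in EN; destruct Rle_dec in EN; lra).
        unfold Rmin in Hm. destruct Rle_dec in Hm.
        * apply Rmult_eq_reg_l with (INR N); [|lra]. field_simplify; lra.
        * exfalso. assert (x = 0)%R by lra. subst x. nra.
      + apply Hu; lia.
      + rewrite !rv_mkq, HQ, minus_INR by lia. simpl. field. lra. }
  assert (Hp : (0 <= Qnum (this r))%Z).
  { apply le_IZR. destruct Hr' as [H0 _]. unfold rv, Q2R in H0. fold q in H0.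
    rewrite HQ in H0. simpl. apply Rmult_le_reg_r with (/ INR N)%R. apply Rinv_0_lt_compat; lra.
    lra. }
  set (p := Z.to_nat (Qnum (this r))).
  assert (Er : r = mkq p q).
  { apply rv_inj. rewrite rv_mkq. unfold rv, Q2R. fold q. unfold p. rewrite INR_IZR_INZ, Z2Nat.id; auto. }
  assert (Hpn : (p <= N)%nat).
  { apply INR_le. destruct Hr' as [_ H1]. rewrite Er, rv_mkq, HQ in H1.
    apply Rmult_le_reg_r with (/ INR N)%R. apply Rinv_0_lt_compat; lra.
    unfold Rdiv in H1. rewrite Rinv_r by lra. lra. }
  rewrite Er at 1. rewrite Cl by auto. rewrite Er, rv_mkq, HQ, HxN.
  apply le_INR in Hpn. rewrite Rmin_left. field. lra.
  unfold Rdiv. rewrite Rmult_1_l. apply Rmult_le_reg_r with (INR N). lra.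
  rewrite Rmult_assoc, Rinv_l by lra. lra.
Qed.
End Pts.

Section Hom.
Context {A B : MVAlg} (f : A -> B) (Hf : is_mv_hom A B f).
Lemma hom_plus x y : f (mplus A x y) = mplus B (f x) (f y). Proof. apply Hf. Qed.
Lemma hom_neg x : f (mneg A x) = mneg B (f x). Proof. apply Hf. Qed.
Lemma hom_zero : f (mzero A) = mzero B. Proof. apply Hf. Qed.
Lemma hom_one : f mone = mone. Proof. unfold mone. rewrite hom_neg, hom_zero. auto. Qed.
Lemma hom_mul x y : f (mmul x y) = mmul (f x) (f y).
Proof. unfold mmul. rewrite hom_neg, hom_plus, !hom_neg. auto. Qed.
Lemma hom_imp x y : f (mimp x y) = mimp (f x) (f y).
Proof. unfold mimp. rewrite hom_plus, hom_neg. auto. Qed.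
Lemma hom_join x y : f (mjoin x y) = mjoin (f x) (f y).
Proof. unfold mjoin. rewrite hom_plus, hom_neg, hom_plus, hom_neg. auto. Qed.
Lemma hom_le x y : mle x y -> mle (f x) (f y).
Proof. unfold mle. intro H. rewrite <- hom_neg, <- hom_plus, H. apply hom_one. Qed.

Lemma kernel_max : (forall b, exists a, f a = b) -> simple_mv B ->
  maximal_filter A (fun a => f a = mone).
Proof.
  intros Hs [Hnt Hsimp].
  assert (HK : is_filter A (fun a => f a = mone)).
  { split; [|split].
    - apply hom_one.
    - intros x y Hx Hxy. apply le1_eq. rewrite <- Hx. apply hom_le; auto.
    - intros x y Hx Hy. rewrite hom_mul, Hx, Hy. apply m1. }
  split. split; auto. rewrite hom_zero. auto.
  intros G [HG HG0] HKG x Gx.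
  set (IG := fun b => exists g, G g /\ f g = b).
  assert (HIG : is_filter B IG).
  { split; [|split].
    - exists mone. split. apply filter_one; auto. apply hom_one.
    - intros b b' [g [Gg <-]] Hle. destruct (Hs b') as [a <-]. exists (mjoin g a). split.
      + apply filter_up with g; auto. apply join_ubl.
      + rewrite hom_join. apply join_le. auto.
    - intros b b' [g [Gg <-]] [g' [Gg' <-]]. exists (mmul g g'). split.
      apply filter_mul; auto. apply hom_mul. }
  destruct (Hsimp IG HIG) as [H1|H2].
  - apply H1. exists x. auto.
  - exfalso. destruct (H2 (mzero B)) as [g [Gg Hg]]. apply HG0.
    rewrite <- (mulneg g). apply filter_mul; auto. apply HKG. rewrite hom_neg, Hg. reflexivity.
Qed.
End Hom.

Lemma separation (A : Pavelka) : semisimple A ->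
  forall x y : A, (forall h, ispoint A h -> h x = h y) -> x = y.
Proof.
  intros [I [B [f [Hsimp [Hhom [Hsurj Hinj]]]]]] x y Hxy. apply Hinj. intro i.
  pose proof (kernel_max (f i) (Hhom i) (Hsurj i) (Hsimp i)) as HK.
  destruct (holder_point A _ HK) as [Hp Hker].
  set (h := hM _ HK) in *.
  assert (Hhp := Hxy h Hp).
  assert (L : forall u v, h u = h v -> mle (f i u) (f i v)).
  { intros u v E. unfold mle. rewrite <- (hom_neg _ (Hhom i)), <- (hom_plus _ (Hhom i)).
    apply Hker. fold (mimp u v). rewrite (pt_imp h (proj1 Hp)), E. rewrite Rmin_right; lra. }
  apply le_antisym; apply L; auto.
Qed.

Lemma ext_max (A : MVAlg) (G : A -> Prop) : proper_filter A G ->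
  exists M, maximal_filter A M /\ (forall x, G x -> M x).
Proof.
  intros [HG HG0].
  set (P := fun X : A -> Prop => (forall x, ~ X x) \/ (proper_filter A X /\ forall x, G x -> X x)).
  destruct (@classical_sets.Zorn_bigcup A P) as [M [PM Mmax]].
  - intros F FP Ftot.
    destruct (classic (exists X, F X /\ exists x, X x)) as [[X0 [FX0 [x0 Hx0]]]|Hno].
    + right. assert (HX0 : proper_filter A X0 /\ forall x, G x -> X0 x).
      { destruct (FP X0 FX0) as [H|H]; auto. exfalso. eapply H; eauto. }
      assert (Fil : forall X, F X -> forall x, X x -> proper_filter A X).
      { intros X FX x Xx. destruct (FP X FX) as [H|[H _]]; auto. exfalso; eapply H; eauto. }
      split; [split; [split; [|split]|]|].
      * exists X0; auto. apply (proj1 (proj1 (proj1 HX0))).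
      * intros x y [X FX Xx] Hxy. exists X; auto. destruct (Fil X FX x Xx) as [HF _].
        eapply filter_up; eauto.
      * intros x y [X FX Xx] [Y FY Yy]. destruct (Ftot X Y FX FY) as [S|S].
        -- exists Y; auto. apply filter_mul; auto. apply (Fil Y FY y Yy).
        -- exists X; auto. apply filter_mul; auto. apply (Fil X FX x Xx).
      * intros [X FX X0']. destruct (Fil X FX _ X0') as [_ H]. auto.
      * intros x Gx. exists X0; auto. apply HX0; auto.
    + left. intros x [X FX Xx]. apply Hno. exists X. eauto.
  - destruct PM as [H0|[PM GM]].
    + exfalso. apply (Mmax G). split. red. intros x Mx. exfalso; eapply H0; eauto.
      intro S. apply (H0 mone). apply S. apply filter_one; auto.
      right. split; auto. split; auto.
    + exists M. split; auto. split; auto.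
      intros H PH MH x Hx. apply NNPP. intro Mx. apply (Mmax H).
      split. exact MH. intro S. apply Mx. apply S. auto.
      right. split; auto.
Qed.

Lemma inf_exists (S : R -> Prop) (lb : R) (t0 : R) : S t0 -> (forall t, S t -> (lb <= t)%R) ->
  exists r, is_inf S r.
Proof.
  intros H0 Hlb.
  destruct (completeness (fun u => S (- u)%R)) as [m [Hm1 Hm2]].
  - exists (- lb)%R. intros u Hu. apply Hlb in Hu. lra.
  - exists (- t0)%R. rewrite Ropp_involutive. auto.
  - exists (- m)%R. split.
    + intros t Ht. assert (m >= - t)%R. { apply Rle_ge. apply Hm1. rewrite Ropp_involutive. auto. } lra.
    + intros b Hb. assert (m <= - b)%R. { apply Hm2. intros u Hu. apply Hb in Hu. lra. } lra.
Qed.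

Section Main.
Context {A : Pavelka} (E : A -> A) (HE : monadic A E) (HS : semisimple A).
Local Notation "x ⊕ y" := (mplus A x y) (at level 50, left associativity).
Local Notation "¬ x" := (mneg A x) (at level 35, right associativity).
Local Notation "0" := (mzero A).
Local Notation "1" := (@mone A).
Local Notation "x ⊙ y" := (mmul x y) (at level 40, left associativity).
Local Notation "x ≤ y" := (mle x y) (at level 70).
Local Notation c := (pconst A).
Implicit Types x y z a b g j : A.

Lemma sep x y : (forall h, ispoint A h -> h x = h y) -> x = y.
Proof. apply separation; auto. Qed.
Lemma le_pt x y : (forall h, ispoint A h -> (h x <= h y)%R) -> x ≤ y.
Proof.
  intro H. unfold mle. fold (mimp x y). apply sep. intros h Hp.
  rewrite (pt_imp h (proj1 Hp)), (pt_one h (proj1 Hp)). specialize (H h Hp). rewrite Rmin_right; lra.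
Qed.
Lemma eq_pt x y : (forall h, ispoint A h -> (h x <= h y)%R) -> (forall h, ispoint A h -> (h y <= h x)%R) -> x = y.
Proof. intros. apply le_antisym; apply le_pt; auto. Qed.

Lemma E_mono x y : x ≤ y -> E x ≤ E y. Proof. apply HE. Qed.
Lemma E_ext x : x ≤ E x. Proof. apply HE. Qed.
Lemma E_idem x : E (E x) = E x. Proof. apply HE. Qed.
Lemma E_neg x : E (¬ E x) = ¬ E x. Proof. apply HE. Qed.
Lemma E_const x r : unitQ r -> c r ⊙ E x = E (c r ⊙ x). Proof. apply HE. Qed.

Definition Bset b := E b = b.
Lemma B_E x : Bset (E x). Proof. apply E_idem. Qed.
Lemma B_neg b : Bset b -> Bset (¬ b). Proof. unfold Bset. intro H. rewrite <- H at 1 2. apply E_neg. Qed.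
Lemma E_le_B x b : x ≤ b -> Bset b -> E x ≤ b.
Proof. intros H Hb. rewrite <- Hb. apply E_mono. auto. Qed.
Lemma B_of_le b : E b ≤ b -> Bset b. Proof. intro H. apply le_antisym; auto. apply E_ext. Qed.
Lemma B_mulc b r : Bset b -> unitQ r -> Bset (c r ⊙ b).
Proof. unfold Bset. intros H Hr. rewrite <- E_const; auto. rewrite H. auto. Qed.
Lemma B_plusc b r : Bset b -> unitQ r -> Bset (c r ⊕ b).
Proof.
  intros H Hr. assert (Ee : c r ⊕ b = ¬ (c (Qcminus (Q2Qc 1) r) ⊙ ¬ b)).
  { rewrite <- cneg, neg_mul, !nn; auto. }
  rewrite Ee. apply B_neg, B_mulc. apply B_neg; auto.
  pose proof (uQ _ Hr). apply Qu. rewrite rv_minus, rv1. lra.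
Qed.
Lemma E_one : E 1 = 1. Proof. apply le1_eq. apply E_ext. Qed.
Lemma B_c r : unitQ r -> Bset (c r).
Proof. intro Hr. rewrite <- (m1 (c r)). apply B_mulc; auto. apply E_one. Qed.
Lemma B_zero : Bset 0.
Proof. rewrite <- czero. apply B_c. apply Qu. rewrite rv0. lra. Qed.
Lemma B_meet b1 b2 : Bset b1 -> Bset b2 -> Bset (mmeet b1 b2).
Proof.
  intros H1 H2. apply B_of_le. apply meet_glb; apply E_le_B; auto using meet_lbl, meet_lbr.
Qed.
Lemma B_join b1 b2 : Bset b1 -> Bset b2 -> Bset (mjoin b1 b2).
Proof.
  intros H1 H2. assert (Ee : mjoin b1 b2 = ¬ mmeet (¬ b1) (¬ b2)) by (unfold mmeet; rewrite !nn; auto).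
  rewrite Ee. apply B_neg, B_meet; apply B_neg; auto.
Qed.
Lemma univ_le x : univ A E x ≤ x.
Proof. unfold univ. rewrite <- le_neg_iff, nn. apply E_ext. Qed.
Lemma B_univ x : Bset (univ A E x). Proof. unfold univ. apply B_neg, B_E. Qed.
Lemma univ_B b : Bset b -> univ A E b = b.
Proof. intro H. unfold univ. rewrite (B_neg _ H), nn. auto. Qed.

Ltac pts h Hp := pose proof (proj1 Hp) as Hh;
  repeat (rewrite ?(pt_plus h Hh), ?(pt_neg h Hh), ?(pt_mul h Hh), ?(pt_imp h Hh),
     ?(pt_join h Hh), ?(pt_meet h Hh), ?(pt_one h Hh), ?(pt_zero h Hh)).


Fixpoint muln (d : A) (n : nat) : A := match n with O => 0 | S k => d ⊕ muln d k end.
Lemma pt_muln h d n : is_std_hom A h -> h (muln d n) = Rmin (INR n * h d) 1.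
Proof.
  intro Hh. pose proof (pt_range h Hh d). induction n; cbn [muln].
  rewrite (pt_zero h Hh). rewrite Rmult_0_l, Rmin_left; lra.
  rewrite (pt_plus h Hh), IHn. rewrite S_INR. pose proof (pos_INR n).
  unfold Rmin; repeat destruct Rle_dec; nra.
Qed.

Lemma Bool (Bplus : forall b1 b2, Bset b1 -> Bset b2 -> Bset (b1 ⊕ b2)) : R_boolean A E.
Proof.
  intros F F' h h' HF HF' [Hh Hk] [Hh' Hk'] r [Hr1 Hr2].
  assert (Hsimp0 : forall a, (0 <= simp (h' (univ A E a)) (h a))%R).
  { intro a. pose proof (pt_range h Hh a). pose proof (pt_range h' Hh' (univ A E a)).
    unfold simp, splus, sneg, Rmin. destruct Rle_dec; lra. }
  destruct (classic (exists b, Bset b /\ h b <> h' b)) as [[b [Hb Hne]]|Hno].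
  - left. apply Rle_antisym.
    2: { apply Hr2. intros t [a ->]. auto. }
    assert (Hex : exists b0, Bset b0 /\ (h b0 < h' b0)%R).
    { destruct (Rlt_dec (h b) (h' b)). exists b; auto.
      exists (¬ b). split. apply B_neg; auto. rewrite (pt_neg h Hh), (pt_neg h' Hh'). lra. }
    clear b Hb Hne. destruct Hex as [b [Hb Hlt]].
    pose proof (pt_range h Hh b). pose proof (pt_range h' Hh' b).
    destruct (Qc_dense (h b) (h' b)) as [s [Hs Hs2]]; try lra.
    pose proof (uQ _ Hs).
    set (s' := Qcminus (Q2Qc 1) s).
    assert (Hs' : unitQ s') by (apply Qu; unfold s'; rewrite rv_minus, rv1; lra).
    set (d := c s' ⊙ b).
    assert (Hd : Bset d) by (apply B_mulc; auto).
    assert (hd : h d = 0%R).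
    { unfold d. rewrite (pt_mul h Hh), (pt_const h Hh); auto. unfold s'. rewrite rv_minus, rv1.
      unfold Rmax; destruct Rle_dec; lra. }
    assert (hd' : h' d = (h' b - rv s)%R).
    { unfold d. rewrite (pt_mul h' Hh'), (pt_const h' Hh'); auto. unfold s'. rewrite rv_minus, rv1.
      unfold Rmax; destruct Rle_dec; lra. }
    destruct (INR_unbounded (/ (h' b - rv s))) as [n Hn].
    set (b' := muln d n).
    assert (Hb' : Bset b').
    { unfold b'. clear Hn. induction n; simpl. apply B_zero. apply Bplus; auto. }
    assert (hb' : h b' = 0%R).
    { unfold b'. rewrite (pt_muln h d n Hh), hd, Rmult_0_r, Rmin_left; lra. }
    assert (hb'' : h' b' = 1%R).
    { unfold b'. rewrite (pt_muln h' d n Hh'), hd'. apply Rmin_right.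
      assert (0 < h' b - rv s)%R by lra.
      apply Rmult_gt_compat_r with (r := (h' b - rv s)%R) in Hn; auto.
      rewrite Rinv_l in Hn; lra. }
    apply Rle_trans with (simp (h' (univ A E b')) (h b')).
    + apply Hr1. exists b'. auto.
    + rewrite univ_B; auto. rewrite hb', hb''. unfold simp, splus, sneg. rewrite Rmin_left; lra.
  - right. assert (Hall : forall a, simp (h' (univ A E a)) (h a) = 1%R).
    { intro a. assert (E1 : h' (univ A E a) = h (univ A E a)).
      { symmetry. apply NNPP. intro Hn. apply Hno. exists (univ A E a). split; auto. apply B_univ. }
      rewrite E1. pose proof (pt_le h Hh _ _ (univ_le a)).
      unfold simp, splus, sneg. apply Rmin_right. lra. }
    apply Rle_antisym.
    + rewrite <- (Hall 0). apply Hr1. exists 0. auto.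
    + apply Hr2. intros t [a ->]. rewrite Hall. lra.
Qed.

End Main.

Section Rep.
Context {A : Pavelka} (E : A -> A) (HE : monadic A E) (HS : semisimple A) (HR : R_boolean A E).
Local Notation "x ⊕ y" := (mplus A x y) (at level 50, left associativity).
Local Notation "¬ x" := (mneg A x) (at level 35, right associativity).
Local Notation "0" := (mzero A).
Local Notation "1" := (@mone A).
Local Notation "x ⊙ y" := (mmul x y) (at level 40, left associativity).
Local Notation "x ≤ y" := (mle x y) (at level 70).
Local Notation c := (pconst A).
Local Notation Bset := (Bset E).
Implicit Types x y z a b g j : A.

Ltac rdest := repeat match goal with
  | |- context[Rle_dec ?x ?y] => destruct (Rle_dec x y)
  | H : context[Rle_dec ?x ?y] |- _ => destruct (Rle_dec x y) end.

Lemma agree p q eps : ispoint A p -> ispoint A q -> (0 < eps)%R ->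
  (forall a, (eps <= simp (q (univ A E a)) (p a))%R) -> forall b, Bset b -> p b = q b.
Proof.
  intros Hp Hq He Hall.
  assert (Hs0 : forall a, (0 <= simp (q (univ A E a)) (p a))%R).
  { intro a. pose proof (pt_range p (proj1 Hp) a). pose proof (pt_range q (proj1 Hq) (univ A E a)).
    unfold simp, splus, sneg, Rmin. destruct Rle_dec; lra. }
  destruct (inf_exists (fun t => exists a, t = simp (q (univ A E a)) (p a)) 0 _ (ex_intro _ 0 eq_refl))
    as [r Hr].
  { intros t [a ->]. auto. }
  assert (Hr1 : r = 0%R \/ r = 1%R).
  { apply (HR (fun z => p z = 1%R) (fun z => q z = 1%R) p q); try apply Hp; try apply Hq; auto.
    split. apply Hp. tauto. split. apply Hq. tauto. }
  assert (Hge : (eps <= r)%R). { apply (proj2 Hr). intros t [a ->]. auto. }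
  assert (Hall1 : forall a, (q (univ A E a) <= p a)%R).
  { intro a. assert (Hx : (r <= simp (q (univ A E a)) (p a))%R) by (apply (proj1 Hr); eauto).
    destruct Hr1 as [->| ->]; [lra|]. unfold simp, splus, sneg, Rmin in Hx. destruct Rle_dec in Hx; lra. }
  intros b Hb. apply Rle_antisym.
  - pose proof (Hall1 (¬ b)) as H. rewrite univ_B in H; auto. 2: apply B_neg; auto.
    rewrite (pt_neg p (proj1 Hp)), (pt_neg q (proj1 Hq)) in H. lra.
  - pose proof (Hall1 b) as H. rewrite univ_B in H; auto.
Qed.

Fixpoint lprod (l : list A) : A := match l with nil => 1 | x :: l => x ⊙ lprod l end.
Lemma lprod_app l1 l2 : lprod (l1 ++ l2) = lprod l1 ⊙ lprod l2.
Proof. induction l1; simpl. rewrite m1l; auto. rewrite IHl1, mA. auto. Qed.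

Lemma rep q a t : ispoint A q -> (t < q (E a))%R ->
  exists p, ispoint A p /\ (forall b, Bset b -> p b = q b) /\ (t < p a)%R.
Proof.
  intros Hq Ht. pose proof (proj1 Hq) as Hqh.
  destruct (Rlt_dec t 0) as [Htn|Htp].
  { exists q. split; auto. split; auto. pose proof (pt_range q Hqh a). lra. }
  pose proof (pt_range q Hqh (E a)) as HeR.
  destruct (Qc_dense t (q (E a))) as [t' [Ht' Ht'2]]; try lra.
  destruct (Qc_dense 0 (q (E a) / 2)) as [ep [Hep Hep2]]; try lra.
  pose proof (uQ _ Ht'). pose proof (uQ _ Hep).
  set (Gen := fun x => x = mimp (c t') a \/ exists b, Bset b /\ (1 - rv ep < q b)%R /\ x = mimp (c ep) b).
  set (GF := fun x => exists l, Forall Gen l /\ lprod l ≤ x).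
  assert (HGF : is_filter A GF).
  { split; [|split].
    - exists nil. split; auto. apply le_refl.
    - intros x y [l [Hl Hle]] Hxy. exists l. split; auto. eapply le_trans; eauto.
    - intros x y [l [Hl Hle]] [l' [Hl' Hle']]. exists (l ++ l'). split. apply Forall_app; auto.
      rewrite lprod_app. apply le_mul2; auto. }
  destruct (classic (GF 0)) as [[l [Hl Hl0]]|HG0].
  - exfalso.
    assert (Inv : forall l, Forall Gen l -> exists j, Bset j /\ (q j < rv ep)%R /\
       forall s, ispoint A s -> (s (lprod l) < 1)%R -> (s a < rv t')%R \/ (1 - rv ep < s j)%R).
    { clear l Hl Hl0. induction 1 as [|x l Hx Hl IH].
      - exists 0. split. apply B_zero; auto. split. rewrite (pt_zero q Hqh). lra.
        intros s Hs. simpl. rewrite (pt_one s (proj1 Hs)). lra.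
      - destruct IH as [j [Hj [Hqj Hsj]]]. destruct Hx as [->|[b [Hb [Hqb ->]]]].
        + exists j. split; auto. split; auto. intros s Hs. simpl. pose proof (proj1 Hs) as Hsh.
          rewrite (pt_mul s Hsh), (pt_imp s Hsh), (pt_const s Hsh); auto. intro Hlt.
          destruct (Rlt_dec (s (lprod l)) 1) as [H1|H1]. apply Hsj; auto.
          left. pose proof (pt_range s Hsh (lprod l)). pose proof (pt_range s Hsh a).
          unfold Rmax, Rmin in Hlt. rdest; lra.
        + exists (mjoin (¬ b) j). split. apply B_join; auto. apply B_neg; auto.
          split. rewrite (pt_join q Hqh), (pt_neg q Hqh). unfold Rmax; destruct Rle_dec; lra.
          intros s Hs. simpl. pose proof (proj1 Hs) as Hsh.
          rewrite (pt_mul s Hsh), (pt_imp s Hsh), (pt_const s Hsh), (pt_join s Hsh), (pt_neg s Hsh); auto.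
          intro Hlt. pose proof (pt_range s Hsh (lprod l)). pose proof (pt_range s Hsh b).
          pose proof (Rmax_l (1 - s b) (s j)). pose proof (Rmax_r (1 - s b) (s j)).
          destruct (Rlt_dec (s (lprod l)) 1) as [Hc1|Hc1].
          * destruct (Hsj s Hs Hc1) as [|]; [left; auto|right; lra].
          * right. unfold Rmax, Rmin in Hlt. rdest; try lra. }
    destruct (Inv l Hl) as [j [Hj [Hqj Hsj]]].
    set (g := mjoin (c t') (c ep ⊕ j)).
    assert (Hg : Bset g) by (apply B_join; auto; [apply B_c; auto | apply B_plusc; auto]).
    assert (Hag : a ≤ g).
    { apply (le_pt HS). intros s Hs. pose proof (proj1 Hs) as Hsh. unfold g.
      rewrite (pt_join s Hsh), (pt_plus s Hsh), !(pt_const s Hsh); auto.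
      assert (Hl0' : (s (lprod l) < 1)%R).
      { pose proof (pt_le s Hsh _ _ Hl0) as Hz. rewrite (pt_zero s Hsh) in Hz. lra. }
      pose proof (pt_range s Hsh a). pose proof (pt_range s Hsh j).
      destruct (Hsj s Hs Hl0') as [Ha|Ha]; unfold Rmax, Rmin; rdest; lra. }
    pose proof (pt_le q Hqh _ _ (E_le_B E HE _ _ Hag Hg)) as Hqa.
    unfold g in Hqa. rewrite (pt_join q Hqh), (pt_plus q Hqh), !(pt_const q Hqh) in Hqa; auto.
    pose proof (pt_range q Hqh j).
    unfold Rmax, Rmin in Hqa; rdest; lra.
  - destruct (ext_max A GF) as [M [HM HGM]]. split; auto.
    destruct (holder_point A M HM) as [Hp Hker]. set (p := hM M HM) in *.
    pose proof (proj1 Hp) as Hph.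
    assert (Hgen : forall x, Gen x -> p x = 1%R).
    { intros x Hx. apply Hker. apply HGM. exists (x :: nil). split. constructor; auto.
      simpl. rewrite m1. apply le_refl. }
    exists p. split; auto. split.
    + apply (agree p q (rv ep)); auto. lra.
      intro a'. pose proof (pt_range q Hqh (univ A E a')). pose proof (pt_range p Hph a').
      unfold simp, splus, sneg.
      destruct (Rlt_dec (1 - rv ep) (q (univ A E a'))) as [Hc|Hc].
      * assert (Hg1 := Hgen (mimp (c ep) (univ A E a')) (or_intror (ex_intro _ (univ A E a')
           (conj (B_univ E HE a') (conj Hc eq_refl))))).
        rewrite (pt_imp p Hph), (pt_const p Hph) in Hg1; auto.
        pose proof (pt_le p Hph _ _ (univ_le E HE a')).
        unfold Rmin in *; rdest; lra.
      * unfold Rmin; destruct Rle_dec; lra.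
    + assert (Hg1 := Hgen (mimp (c t') a) (or_introl eq_refl)).
      rewrite (pt_imp p Hph), (pt_const p Hph) in Hg1; auto.
      unfold Rmin in Hg1; destruct Rle_dec in Hg1; lra.
Qed.
End Rep.

Section Final.
Context {A : Pavelka} (E : A -> A) (HE : monadic A E) (HS : semisimple A).
Local Notation "x ⊕ y" := (mplus A x y) (at level 50, left associativity).
Local Notation "¬ x" := (mneg A x) (at level 35, right associativity).
Local Notation "0" := (mzero A).
Local Notation "1" := (@mone A).
Local Notation "x ⊙ y" := (mmul x y) (at level 40, left associativity).
Local Notation "x ≤ y" := (mle x y) (at level 70).
Local Notation c := (pconst A).
Local Notation Bset := (Bset E).
Implicit Types x y z a b g j : A.

Ltac rdest := repeat match goal with
  | |- context[Rle_dec ?x ?y] => destruct (Rle_dec x y)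
  | H : context[Rle_dec ?x ?y] |- _ => destruct (Rle_dec x y) end.

Definition III := forall x y : A, mle (mmul (univ A E x) (univ A E y)) (univ A E (mmul x y)).

Lemma Bplus_orig : monadic_original A E -> forall b1 b2, Bset b1 -> Bset b2 -> Bset (b1 ⊕ b2).
Proof.
  intros [_ [_ [_ [H4 _]]]] b1 b2 H1 H2. unfold Bset.
  pose proof (H4 b1 b2) as H. rewrite H1, H2 in H. auto.
Qed.

Lemma Bplus_iii : III -> forall b1 b2, Bset b1 -> Bset b2 -> Bset (b1 ⊕ b2).
Proof.
  intros H3 b1 b2 H1 H2. apply B_of_le; auto. apply (le_pt HS). intros h Hp.
  pose proof (proj1 Hp) as Hh.
  pose proof (pt_le h Hh _ _ (H3 (¬ b1) (¬ b2))) as H.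
  rewrite (univ_B E HE (¬ b1)), (univ_B E HE (¬ b2)) in H by (apply B_neg; auto).
  unfold univ in H. rewrite neg_mul, !nn in H.
  rewrite (pt_mul h Hh), !(pt_neg h Hh) in H. rewrite (pt_plus h Hh).
  pose proof (pt_range h Hh (E (b1 ⊕ b2))).
  unfold Rmax, Rmin in *; rdest; lra.
Qed.

Lemma iii_orig : monadic_original A E -> III.
Proof.
  intros Ho x y. pose proof (Bplus_orig Ho) as Bp. apply (le_pt HS). intros h Hp.
  pose proof (proj1 Hp) as Hh. unfold univ. rewrite neg_mul.
  assert (Hle : E (¬ x ⊕ ¬ y) ≤ E (¬ x) ⊕ E (¬ y)).
  { apply E_le_B; auto. apply le_plus2; apply E_ext; auto. apply Bp; apply B_E; auto. }
  apply (pt_le h Hh) in Hle. rewrite (pt_plus h Hh) in Hle.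
  rewrite (pt_mul h Hh), !(pt_neg h Hh).
  pose proof (pt_range h Hh (E (¬ x))). pose proof (pt_range h Hh (E (¬ y))).
  unfold Rmax, Rmin in *; rdest; lra.
Qed.

Section WithR.
Hypothesis HR : R_boolean A E.

Lemma rep_le q a v : ispoint A q ->
  (forall p, ispoint A p -> (forall b, Bset b -> p b = q b) -> (p a <= v)%R) -> (q (E a) <= v)%R.
Proof.
  intros Hq H. apply Rnot_lt_le. intro Hc.
  destruct (rep E HE HS HR q a v Hq Hc) as [p [Hp [Ha Hv]]]. specialize (H p Hp Ha). lra.
Qed.

Lemma orig_R : monadic_original A E.
Proof.
  split; [|split; [|split; [|split; [|split; [|split]]]]].
  - apply E_ext; auto.
  - intros x y. apply le_antisym.
    + apply E_le_B; auto. apply join_mono; apply E_ext; auto. apply B_join; auto; apply B_E; auto.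
    + apply join_lub; apply E_mono; auto. apply join_ubl. apply join_ubr.
  - apply E_neg; auto.
  - intros x y. apply le_antisym; [|apply E_ext; auto]. apply (le_pt HS). intros q Hq.
    apply rep_le; auto. intros p Hp Hag. pose proof (proj1 Hp) as Hph. pose proof (proj1 Hq) as Hqh.
    rewrite (pt_plus p Hph), (pt_plus q Hqh), (Hag (E x)), (Hag (E y)) by (apply B_E; auto). lra.
  - intro x. apply (eq_pt HS); intros q Hq; pose proof (proj1 Hq) as Hqh.
    + apply rep_le; auto. intros p Hp Hag. pose proof (proj1 Hp) as Hph.
      rewrite (pt_plus p Hph), (pt_plus q Hqh), <- !(Hag (E x)) by (apply B_E; auto).
      pose proof (pt_le p Hph _ _ (E_ext E HE x)).
      unfold Rmin; rdest; lra.
    + rewrite (pt_plus q Hqh). apply Rnot_lt_le. intro Hc.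
      set (L := q (E (x ⊕ x))) in *. set (e := q (E x)) in *.
      pose proof (pt_range q Hqh (E (x ⊕ x))). fold L in H.
      assert (HL : (L < 2 * e)%R /\ (L < 1)%R) by (unfold Rmin in Hc; rdest; lra).
      destruct (rep E HE HS HR q x ((L / 2 + e) / 2) Hq) as [p [Hp [Hag Hv]]]. fold e. lra.
      pose proof (proj1 Hp) as Hph.
      pose proof (pt_le p Hph _ _ (E_ext E HE (x ⊕ x))). rewrite (pt_plus p Hph) in H0.
      rewrite (Hag (E (x ⊕ x))) in H0 by (apply B_E; auto). fold L in H0.
      unfold Rmin in H0; rdest; lra.
  - intro x. apply (eq_pt HS); intros q Hq; pose proof (proj1 Hq) as Hqh.
    + apply rep_le; auto. intros p Hp Hag. pose proof (proj1 Hp) as Hph.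
      rewrite (pt_mul p Hph), (pt_mul q Hqh), <- !(Hag (E x)) by (apply B_E; auto).
      pose proof (pt_le p Hph _ _ (E_ext E HE x)).
      unfold Rmax; rdest; lra.
    + rewrite (pt_mul q Hqh). apply Rnot_lt_le. intro Hc.
      set (L := q (E (x ⊙ x))) in *. set (e := q (E x)) in *.
      pose proof (pt_range q Hqh (E (x ⊙ x))). fold L in H.
      assert (HL : (L < 2 * e - 1)%R) by (unfold Rmax in Hc; rdest; lra).
      destruct (rep E HE HS HR q x (((L + 1) / 2 + e) / 2) Hq) as [p [Hp [Hag Hv]]]. fold e. lra.
      pose proof (proj1 Hp) as Hph.
      pose proof (pt_le p Hph _ _ (E_ext E HE (x ⊙ x))). rewrite (pt_mul p Hph) in H0.
      rewrite (Hag (E (x ⊙ x))) in H0 by (apply B_E; auto). fold L in H0.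
      unfold Rmax in H0; rdest; lra.
  - intros r Hr. apply B_c; auto.
Qed.
End WithR.
End Final.

Theorem theorem16 (A : Pavelka) (E : A -> A) :
  monadic A E -> semisimple A ->
  (R_boolean A E <-> monadic_original A E) /\
  (monadic_original A E <->
     (forall x y : A, mle (mmul (univ A E x) (univ A E y)) (univ A E (mmul x y)))).
Proof.
  intros HE HS. split; split.
  - apply orig_R; auto.
  - intro Ho. apply Bool; auto. apply Bplus_orig; auto.
  - apply iii_orig; auto.
  - intro H3. apply orig_R; auto. apply Bool; auto. apply Bplus_iii; auto.
Qed.
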